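(* (i) $\mathfrak{L}$ is a system of representatives of $\mathfrak{H}/\!\sim$. (ii) If $\underline h,\underline h'\in\mathfrak{H}$ and $\underline h\sim\underline h'$, then $J^{\underline h}=J^{\underline h'}$ and $\mathfrak{S}^{\underline h}=\mathfrak{S}^{\underline h'}$. (iii) If $\underline\ell,\underline\ell'\in\mathfrak{L}$ and $\underline\ell\ne\underline\ell'$, then $\mathfrak{S}^{\underline\ell}\cap\mathfrak{S}^{\underline\ell'}=\emptyset$. (iv) For each $\underline\ell\in\mathfrak{L}$, the map $m\in\mathfrak{S}^{\underline\ell}\mapsto m^2\bmod 4P$ is constant.
   Context: $r\ge3$; $p_1,\dots,p_r$ positive pairwise coprime, $p_2,\dots,p_r$ odd; $P=p_1\cdots p_r$, $\hat p_j=P/p_j$; $E=\{\pm1\}^r$. $\mathfrak{H}$: $\underline h\in\mathbb{Z}^r$ with $0\le h_j\le p_j$ and $h_j/p_j\notin\mathbb{Z}$ for at least three $j$; $\mathfrak{L}$: those with $h_j$ even for $j\ge2$. $J^{\underline h}=\{j:p_j\mid h_j\}$; $\mathcal{N}^{\underline h}(\underline\varepsilon)=P+\sum_j\varepsilon_jh_j\hat p_j$; $\mathfrak{S}^{\underline h}=\mathcal{N}^{\underline h}(E)+2P\mathbb{Z}$. Equivalence: $\underline h\sim\underline h'$ iff there is $J\subset\{1,\dots,r\}$ with $|J|$ even such that $h_j=p_j-h'_j$ for $j\in J$ and $h_j=h'_j$ for $j\notin J$. *)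

(* Defs.v *)
(* Indices 1..r of the paper are 'I_r (0-based): paper's index 1 is ord0. *)
From HB Require Import structures.
From mathcomp Require Import all_boot all_order all_algebra.
Set Implicit Arguments. Unset Strict Implicit. Unset Printing Implicit Defensive.
Import Order.TTheory GRing.Theory Num.Theory.
Local Open Scope ring_scope.

Section Defs.
Variables (r : nat) (p : 'I_r -> nat).

Definition bigP : nat := (\prod_(j < r) p j)%N.
Definition phat (j : 'I_r) : nat := (bigP %/ p j)%N.

Definition inH (h : {ffun 'I_r -> int}) : Prop :=
  (forall j, 0 <= h j /\ h j <= (p j)%:Z) /\
  (3 <= #|[set j : 'I_r | ~~ ((p j)%:Z %| h j)%Z]|)%N.

Definition inL (h : {ffun 'I_r -> int}) : Prop :=
  inH h /\ forall j : 'I_r, (0 < val j)%N -> (2 %| h j)%Z.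

Definition Jset (h : {ffun 'I_r -> int}) : {set 'I_r} :=
  [set j : 'I_r | ((p j)%:Z %| h j)%Z].

Definition hequiv (h h' : {ffun 'I_r -> int}) : Prop :=
  exists J : {set 'I_r}, ~~ odd #|J| /\
    forall j, (j \in J -> h j = (p j)%:Z - h' j) /\ (j \notin J -> h j = h' j).

Definition Nval (h : {ffun 'I_r -> int}) (eps : 'I_r -> int) : int :=
  bigP%:Z + \sum_(j < r) eps j * h j * (phat j)%:Z.

Definition inS (h : {ffun 'I_r -> int}) (m : int) : Prop :=
  exists eps : 'I_r -> int, (forall j, eps j = 1 \/ eps j = -1) /\
    exists k : int, m = Nval h eps + 2 * bigP%:Z * k.
End Defs.

(* Main.v *)
Require Import Defs.
From HB Require Import structures.
From mathcomp Require Import all_boot all_order all_algebra.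
From mathcomp Require Import zify ring.
Import Order.TTheory GRing.Theory Num.Theory.
Local Open Scope ring_scope.

Module Helpers.
Set Implicit Arguments. Unset Strict Implicit.

Lemma phatE r (p : 'I_r -> nat) j : (0 < p j)%N ->
  phat p j = (\prod_(k < r | k != j) p k)%N.
Proof.
move=> hj; rewrite /phat /bigP (bigD1 j) //= mulKn //.
Qed.

Lemma PE r (p : 'I_r -> nat) j : (0 < p j)%N -> bigP p = (p j * phat p j)%N.
Proof. by move=> hj; rewrite phatE // /bigP (bigD1 j). Qed.

Lemma dvd_phat r (p : 'I_r -> nat) i j : (0 < p i)%N -> i != j -> (p j %| phat p i)%N.
Proof.
move=> hi ij; rewrite phatE // (bigD1 j) 1?eq_sym //= dvdn_mulr //.
Qed.

Lemma cop_phat r (p : 'I_r -> nat) j : (0 < p j)%N ->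
  (forall i j, i != j -> coprime (p i) (p j)) -> coprime (p j) (phat p j).
Proof.
move=> hj hc; rewrite phatE //.
apply: (big_ind (fun x => coprime (p j) x)) => //.
- by rewrite /coprime gcdn1.
- by move=> x y; rewrite coprimeMr => -> ->.
- by move=> i ij; apply: hc; rewrite eq_sym.
Qed.

Lemma odd_phat r (p : 'I_r -> nat) j : (0 < p j)%N ->
  (forall i, i != j -> odd (p i)) -> odd (phat p j).
Proof.
move=> hj ho; rewrite phatE //.
apply: (big_ind odd) => // x y; rewrite oddM => -> ->. done.
Qed.


Lemma dvdzD' (d a b : int) : (d %| a)%Z -> (d %| b)%Z -> (d %| a + b)%Z.
Proof. by move=> /dvdzP[x ->] /dvdzP[y ->]; apply/dvdzP; exists (x + y); rewrite mulrDl. Qed.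

Lemma dvdz_sum' (I : finType) (P : pred I) (F : I -> int) d :
  (forall i, P i -> (d %| F i)%Z) -> (d %| \sum_(i | P i) F i)%Z.
Proof. by move=> h; apply: (big_ind (dvdz d)) => //; [exact: dvdz0| exact: dvdzD']. Qed.

Lemma Nsplit r (p : 'I_r -> nat) l eps j : Nval p l eps =
  (bigP p)%:Z + eps j * l j * (phat p j)%:Z +
  \sum_(i < r | i != j) eps i * l i * (phat p i)%:Z.
Proof. by rewrite /Nval (bigD1 j) //= addrA. Qed.
Arguments Nsplit {r p} l eps j.

Lemma Nflip r (p : 'I_r -> nat) l eps eps' j
  (hpos : forall j, (0 < p j)%N) :
  (forall i, i != j -> eps' i = eps i) -> eps' j = - eps j ->
  (4 * (bigP p)%:Z %| Nval p l eps ^+ 2 - Nval p l eps' ^+ 2)%Z.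
Proof.
move=> he hj.
set R := \sum_(i < r | i != j) eps i * l i * (phat p i)%:Z.
have ER : \sum_(i < r | i != j) eps' i * l i * (phat p i)%:Z = R.
  by apply: eq_bigr => i ij; rewrite he.
have hY : ((p j)%:Z %| (bigP p)%:Z + R)%Z.
  apply: dvdzD'.
    by apply/dvdzP; exists (phat p j)%:Z; rewrite (PE (hpos j)) PoszM mulrC.
  apply: dvdz_sum' => i ij; apply: dvdz_mull.
  by rewrite dvdzE /=; apply: dvd_phat; rewrite // eq_sym.
case/dvdzP: hY => Y hY.
rewrite (Nsplit l eps j) (Nsplit l eps' j) ER hj.
apply/dvdzP; exists (eps j * l j * Y).
have -> : (bigP p)%:Z = (phat p j)%:Z * (p j)%:Z.
  by rewrite (PE (hpos j)) PoszM mulrC.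
have : (phat p j)%:Z * (p j)%:Z + R = Y * (p j)%:Z by rewrite -hY (PE (hpos j)) PoszM mulrC.
move=> e.
have -> : ((phat p j)%:Z * (p j)%:Z + eps j * l j * (phat p j)%:Z + R) =
   Y * (p j)%:Z + eps j * l j * (phat p j)%:Z by rewrite -e; ring.
have -> : ((phat p j)%:Z * (p j)%:Z + - eps j * l j * (phat p j)%:Z + R) =
   Y * (p j)%:Z - eps j * l j * (phat p j)%:Z by rewrite -e; ring.
ring.
Qed.
Arguments Nflip {r p} l eps eps' j hpos _ _.


Lemma hequiv_sym r (p : 'I_r -> nat) h h' : hequiv p h h' -> hequiv p h' h.
Proof.
case=> J [hJ hh]; exists J; split => // j; case: (hh j) => h1 h2; split.
  by move=> jJ; rewrite h1 // opprB addrC subrK.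
by move=> jJ; rewrite h2.
Qed.

Lemma dvdzN' (d x : int) : (d %| - x)%Z = (d %| x)%Z.
Proof. by rewrite !dvdzE abszN. Qed.

Lemma dvd_subl (d x : int) : (d %| d - x)%Z = (d %| x)%Z.
Proof.
apply/idP/idP => h.
  have := dvdzD' (dvdz_mull (-1) (dvdzz d)) h. by rewrite addrA mulN1r addNr add0r dvdzN'.
by apply: dvdzD'; [exact: dvdzz| rewrite dvdzN'].
Qed.

Lemma Jset_eq r (p : 'I_r -> nat) h h' : hequiv p h h' -> Jset p h = Jset p h'.
Proof.
case=> J [_ hh]; apply/setP => j; rewrite !inE.
case: (hh j) => h1 h2; case: (boolP (j \in J)) => jJ.
  by rewrite h1 // dvd_subl.
by rewrite h2.
Qed.

Lemma even_sum r (J : {set 'I_r}) (eps : 'I_r -> int) :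
  ~~ odd #|J| -> (forall j, eps j = 1 \/ eps j = -1) ->
  exists t, \sum_(j in J) eps j = t * 2.
Proof.
move=> hJ he; apply/dvdzP.
have h1 : (2 %| \sum_(j in J) (eps j + 1))%Z.
  apply: dvdz_sum' => j _; case: (he j) => ->; last by rewrite addNr dvdz0.
  by apply: dvdzz.
have h2 : (2 %| (#|J|)%:Z)%Z by rewrite dvdzE /= dvdn2.
rewrite big_split /= sumr_const in h1.
have := dvdzD' h1 (dvdz_mull (-1) h2).
suff -> : \sum_(i in J) eps i + 1 *+ #|J| + -1 * (#|J|)%:Z = \sum_(j in J) eps j by [].
by rewrite mulN1r natz addrK.
Qed.

Lemma S_incl r (p : 'I_r -> nat) h h' m (hpos : forall j, (0 < p j)%N) :
  hequiv p h h' -> inS p h m -> inS p h' m.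
Proof.
case=> J [hJ hh] [eps [he [k ->]]].
exists (fun j => if j \in J then - eps j else eps j); split.
  by move=> j; case: (j \in J); case: (he j) => ->; rewrite ?opprK; [right|left|left|right].
have [t ht] := even_sum hJ he.
exists (k + t).
have key : Nval p h eps = Nval p h' (fun j => if j \in J then - eps j else eps j)
    + (bigP p)%:Z * \sum_(j in J) eps j.
  rewrite /Nval -addrA; congr (_ + _).
  rewrite mulr_sumr [X in _ = _ + X]big_mkcond /=.
  rewrite -big_split /=; apply: eq_bigr => j _.
  case: (hh j) => h1 h2; case: (boolP (j \in J)) => jJ.
    rewrite h1 // (PE (hpos j)) PoszM; ring.
  by rewrite h2 // addr0.
by rewrite key ht; ring.
Qed.


Lemma Nsq r (p : 'I_r -> nat) l (hpos : forall j, (0 < p j)%N) :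
  forall n (eps : 'I_r -> int), #|[set i | eps i != 1]| = n ->
  (forall i, eps i = 1 \/ eps i = -1) ->
  (4 * (bigP p)%:Z %| Nval p l eps ^+ 2 - Nval p l (fun _ => 1) ^+ 2)%Z.
Proof.
elim=> [|n IH] eps hc he.
  have -> : Nval p l eps = Nval p l (fun _ => 1).
    rewrite /Nval; congr (_ + _); apply: eq_bigr => i _.
    have : i \notin [set i | eps i != 1] by rewrite (cards0_eq hc) inE.
    by rewrite inE negbK => /eqP ->.
  by rewrite subrr dvdz0.
have : (0 < #|[set i | eps i != 1]|)%N by rewrite hc.
case/card_gt0P => j hj.
have ej : eps j = -1 by move: hj; rewrite inE; case: (he j) => ->.
set e2 := fun i => if i == j then 1 else eps i.
have h1 : (4 * (bigP p)%:Z %| Nval p l eps ^+ 2 - Nval p l e2 ^+ 2)%Z.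
  apply: (Nflip l eps e2 j hpos).
    by move=> i ij; rewrite /e2 /= (negbTE ij).
  by rewrite /e2 /= eqxx ej opprK.
have h2 : (4 * (bigP p)%:Z %| Nval p l e2 ^+ 2 - Nval p l (fun _ => 1) ^+ 2)%Z.
  apply: IH.
    have -> : [set i | e2 i != 1] = [set i | eps i != 1] :\ j.
      apply/setP => i; rewrite !inE /e2; case: (i =P j) => [->|]; first by rewrite eqxx.
      by move=> _.
    by move: hc; rewrite (cardsD1 j) hj => -[].
  by move=> i; rewrite /e2; case: (i == j); [left|apply: he].
have := dvdzD' h1 h2.
by rewrite addrA subrK.
Qed.

Lemma part4 r (p : 'I_r -> nat) l (hpos : forall j, (0 < p j)%N) :
  exists c : int,
     forall m, inS p l m -> (m ^+ 2 %% (4 * (bigP p)%:Z))%Z = c.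
Proof.
exists ((Nval p l (fun _ => 1)) ^+ 2 %% (4 * (bigP p)%:Z))%Z.
move=> m [eps [he [k ->]]].
apply/eqP; rewrite eqz_mod_dvd.
have h1 := Nsq l hpos (erefl _) he.
have h2 : (4 * (bigP p)%:Z %| (Nval p l eps + 2 * (bigP p)%:Z * k) ^+ 2 - Nval p l eps ^+ 2)%Z.
  apply/dvdzP; exists (k * Nval p l eps + (bigP p)%:Z * k ^+ 2); ring.
have := dvdzD' h2 h1.
by rewrite addrA subrK.
Qed.



Lemma key_aux (a b q : int) : 0 <= a <= q -> 0 <= b <= q -> 0 < q ->
  forall c, (a - b = c * (q * 2)) \/ (a + b = c * (q * 2)) -> a = b.
Proof.
move=> ha hb hq c [] E.
all: have [Hk|[Hk|[Hk|Hk]]] : (c <= -1 \/ c = 0 \/ c = 1 \/ 2 <= c) by lia.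
all: try (subst c; lia).
all: nia.
Qed.

Lemma eq_of_dvd (a b q e e' : int) : 0 <= a <= q -> 0 <= b <= q -> 0 < q ->
  (e = 1 \/ e = -1) -> (e' = 1 \/ e' = -1) ->
  (q * 2 %| e * a - e' * b)%Z -> a = b.
Proof.
move=> ha hb hq he he' /dvdzP[k hk].
have Hkey := key_aux ha hb hq.
case: he => Ee; case: he' => Ee'; rewrite Ee Ee' in hk.
- by apply: (Hkey k); left; rewrite -hk; ring.
- by apply: (Hkey k); right; rewrite -hk; ring.
- by apply: (Hkey (-k)); right; rewrite mulNr -hk; ring.
- by apply: (Hkey (-k)); left; rewrite mulNr -hk; ring.
Qed.

Lemma part3 r (p : 'I_r -> nat) (hpos : forall j, (0 < p j)%N)
  (hcop : forall i j, i != j -> coprime (p i) (p j))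
  (hodd : forall j : 'I_r, (0 < val j)%N -> odd (p j)) l l' m :
  inL p l -> inL p l' -> inS p l m -> inS p l' m -> l = l'.
Proof.
case=> [[Hb _] Hev] [[Hb' _] Hev'] [eps [he [k Hm]]] [eps' [he' [k' Hm']]].
set x := fun i => eps i * l i - eps' i * l' i.
have hD : Nval p l eps - Nval p l' eps' = \sum_i x i * (phat p i)%:Z.
  rewrite /Nval opprD addrACA subrr add0r -sumrB; apply: eq_bigr => i _.
  rewrite /x; ring.
have hD2 : Nval p l eps - Nval p l' eps' = (bigP p)%:Z * 2 * (k' - k).
  have -> : Nval p l eps = m - 2 * (bigP p)%:Z * k by rewrite Hm addrK.
  have -> : Nval p l' eps' = m - 2 * (bigP p)%:Z * k' by rewrite Hm' addrK.
  ring.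
apply/ffunP => j.
have xev : forall i, (0 < val i)%N -> (2 %| x i)%Z.
  move=> i hi; rewrite /x; apply: dvdzD'; first exact: dvdz_mull (Hev i hi).
  by rewrite dvdzN'; exact: dvdz_mull (Hev' i hi).
have hsplit : x j * (phat p j)%:Z = (Nval p l eps - Nval p l' eps')
    - \sum_(i < r | i != j) x i * (phat p i)%:Z.
  by rewrite hD (bigD1 j) //= addrK.
have hPj : ((p j)%:Z %| (phat p j)%:Z * (p j)%:Z)%Z by apply: dvdz_mull; apply: dvdzz.
have dph : forall i, i != j -> ((p j)%:Z %| (phat p i)%:Z)%Z.
  by move=> i ij; rewrite dvdzE /=; apply: dvd_phat.
have cph : coprimez (p j) (phat p j) by rewrite coprimezE /=; apply: cop_phat.
suff : ((p j)%:Z * 2 %| x j)%Z.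
  move=> H; case: (Hb j) (Hb' j) => a1 a2 [b1 b2].
  apply: (eq_of_dvd _ _ _ (he j) (he' j) H); try by apply/andP.
  by have := hpos j; lia.
case: (posnP (val j)) => hj.
-
  have oth : forall i, i != j -> (0 < val i)%N.
    move=> i ij; rewrite lt0n; apply: contra ij => /eqP h.
    by apply/eqP; apply: val_inj; rewrite /= h hj.
  have cop2 : coprimez ((p j)%:Z * 2) (phat p j).
    rewrite coprimezMl cph /= coprimezE /= coprime2n.
    by apply: odd_phat => // i ij; apply: hodd; apply: oth.
  rewrite -(Gauss_dvdzl _ cop2) hsplit.
  apply: dvdzD'.
    rewrite hD2 (PE (hpos j)) PoszM; apply/dvdzP; exists ((phat p j)%:Z * (k' - k)); ring.
  rewrite dvdzN'; apply: dvdz_sum' => i ij.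
  by rewrite mulrC; apply: dvdz_mul; [apply: dph | apply: xev; apply: oth].
- have cop2 : coprimez (p j) 2 by rewrite coprimezE /= coprimen2; apply: hodd.
  rewrite Gauss_dvdz // xev // andbT -(Gauss_dvdzl _ cph) hsplit.
  apply: dvdzD'.
    rewrite hD2 (PE (hpos j)) PoszM; apply/dvdzP; exists ((phat p j)%:Z * 2 * (k' - k)); ring.
  rewrite dvdzN'; apply: dvdz_sum' => i ij.
  by apply: dvdz_mull; apply: dph.
Qed.


Lemma oddz (n : nat) : odd n -> ~~ (2 %| n%:Z)%Z.
Proof. by rewrite dvdzE /= dvdn2 => ->. Qed.

Lemma part1 r (p : 'I_r -> nat) (hr : (3 <= r)%N) (hpos : forall j, (0 < p j)%N)
  (hodd : forall j : 'I_r, (0 < val j)%N -> odd (p j)) h :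
  inH p h -> exists l, inL p l /\ hequiv p h l /\
        forall l', inL p l' -> hequiv p h l' -> l' = l.
Proof.
case=> Hb Hc.
have r0 : (0 < r)%N by apply: leq_trans hr.
pose o0 : 'I_r := Ordinal r0.
have vo0 : forall j : 'I_r, (j == o0) = (val j == 0%N).
  by move=> j; apply/eqP/eqP => [->|E] //; apply: val_inj.
pose D := [set j : 'I_r | (0 < val j)%N && ~~ (2 %| h j)%Z].
have o0D : o0 \notin D by rewrite inE.
pose J := if odd #|D| then o0 |: D else D.
have JD : forall j, j != o0 -> (j \in J) = (j \in D).
  by move=> j jo; rewrite /J; case: ifP => // _; rewrite in_setU1 (negbTE jo).
have Jo : (o0 \in J) = odd #|D|.
  by rewrite /J; case: ifP => _; [rewrite setU11 | rewrite (negbTE o0D)].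
have Jev : ~~ odd #|J|.
  rewrite /J; case: ifP => hD; last by rewrite hD.
  by rewrite cardsU1 o0D /= hD.
have pos_ne : forall j : 'I_r, (0 < val j)%N = (j != o0).
  by move=> j; rewrite vo0 lt0n.
pose l := [ffun j => if j \in J then (p j)%:Z - h j else h j].
exists l; split; [|split].
- split; [split|].
  + move=> j; rewrite ffunE; case: (Hb j) => a b; case: (j \in J); lia.
  + apply: leq_trans Hc _; apply: subset_leq_card; apply/subsetP => j.
    rewrite !inE ffunE; case: (j \in J) => //; by rewrite dvd_subl.
  + move=> j hj; rewrite ffunE.
    have := oddz (hodd j hj); case: (Hb j) => a b.
    rewrite JD -?pos_ne // inE hj /=.
    case: ifP; [move=> H1 H2; lia| move=> /negbFE H1 _; exact H1].
- exists J; split => // j; rewrite ffunE; split => [->|/negbTE ->] //; ring.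
- move=> l' [[Hb' _] Hev'] [J' [HJ' hh]].
  have JJ : forall j, j != o0 -> (j \in J') = (j \in D).
    move=> j jo; have hj : (0 < val j)%N by rewrite pos_ne.
    have := oddz (hodd j hj); have := Hev' j hj.
    rewrite inE hj /=; case: (hh j) => h1 h2.
    case: (boolP (j \in J')) => jJ; [rewrite h1 //| rewrite h2 //]; move=> A B.
      apply/esym/idP; lia.
    by apply/esym/negbF.
  have J'D : J' :\ o0 = D.
    apply/setP => j; rewrite in_setD1; case: (boolP (j == o0)) => [/eqP->|jo] /=.
      by rewrite (negbTE o0D).
    exact: JJ.
  have Jo' : (o0 \in J') = odd #|D|.
    move: HJ'; rewrite [#|J'|](cardsD1 o0) J'D; case: (o0 \in J') => /=.
      by move/negbNE.
    by move/negbTE.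
  have EJ : J' = J.
    apply/setP => j; case: (boolP (j == o0)) => [/eqP->|jo]; first by rewrite Jo Jo'.
    by rewrite JJ // JD.
  apply/ffunP => j; rewrite ffunE -EJ; case: (hh j) => h1 h2.
  case: (boolP (j \in J')) => jJ; last by rewrite h2.
  by rewrite h1 //; ring.
Qed.

End Helpers.
Import Helpers.

Theorem lemmaB2 (r : nat) (p : 'I_r -> nat)
  (hr : (3 <= r)%N)
  (hpos : forall j, (0 < p j)%N)
  (hcop : forall i j, i != j -> coprime (p i) (p j))
  (hodd : forall j : 'I_r, (0 < val j)%N -> odd (p j)) :
  (* (i) L is a system of representatives of H / ~ *)
  ((forall l, inL p l -> inH p l) /\
   (forall h, inH p h -> exists l, inL p l /\ hequiv p h l /\
        forall l', inL p l' -> hequiv p h l' -> l' = l)) /\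
  (* (ii) *)
  (forall h h', inH p h -> inH p h' -> hequiv p h h' ->
     Jset p h = Jset p h' /\ (forall m, inS p h m <-> inS p h' m)) /\
  (* (iii) *)
  (forall l l', inL p l -> inL p l' -> l <> l' ->
     forall m, ~ (inS p l m /\ inS p l' m)) /\
  (* (iv) *)
  (forall l, inL p l -> exists c : int,
     forall m, inS p l m -> (m ^+ 2 %% (4 * (bigP p)%:Z))%Z = c).
Proof.
split; [split|split; [|split]].
- by move=> l []...
- by move=> h; apply: part1.
- move=> h h' _ _ E; split; first exact: Jset_eq.
  move=> m; split; [exact: S_incl | apply: S_incl => //; exact: hequiv_sym].
- move=> l l' Ll Ll' ne m [S1 S2]; apply: ne; exact: (part3 hpos hcop hodd Ll Ll' S1 S2).
- by move=> l _; apply: part4.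
Qed.
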